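(* For every directed acyclic graph $D$ with distinct nodes $s,t$ and costs $c:E(D)\to\mathbb{R}_+$, the following holds. The minimum cost of an integral solution of the odd path blocker LP $$\min\Big\{\sum_{e\in E(D)}c(e)x_e : \sum_{e\in P}x_e\ge1 \text{ for every odd-length } s\rightarrow t \text{ path } P \text{ in } D,\ x\ge0\Big\}$$ is at most twice the LP optimum. That is, the integrality gap of the odd path blocker LP in DAGs is at most $2$.
   Context: Paths are simple directed paths; odd-length means an odd number of edges. Integral solutions are the $0/1$ vectors $x$ satisfying the path constraints. *)

(* Defs.v *)
From HB Require Import structures.
From mathcomp Require Import all_boot all_order all_algebra.
Set Implicit Arguments. Unset Strict Implicit. Unset Printing Implicit Defensive.
Import Order.TTheory GRing.Theory Num.Theory.

Section Digraph.
Variables (V E : finType) (tl hd : E -> V).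

Fixpoint is_walk (u : V) (p : seq E) (w : V) : bool :=
  match p with
  | [::] => u == w
  | e :: p' => (tl e == u) && is_walk (hd e) p' w
  end.

Definition walk_nodes (u : V) (p : seq E) : seq V := u :: map hd p.

Definition is_path (u : V) (p : seq E) (w : V) : bool :=
  is_walk u p w && uniq (walk_nodes u p).

Definition acyclic : Prop :=
  forall (u : V) (p : seq E), p != [::] -> ~~ is_walk u p u.

Definition odd_path (s t : V) (p : seq E) : bool :=
  is_path s p t && odd (size p).

Local Open Scope ring_scope.
Definition opb_feasible (R : numDomainType) (s t : V) (x : E -> R) : Prop :=
  (forall e, 0 <= x e) /\
  (forall p, odd_path s t p -> 1 <= \sum_(e <- p) x e).

Definition opb_integral (R : numDomainType) (s t : V) (y : E -> R) : Prop :=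
  (forall e, y e = 0 \/ y e = 1) /\ opb_feasible s t y.

Definition cost (R : numDomainType) (c x : E -> R) : R := \sum_(e : E) c e * x e.
End Digraph.

(* Main.v *)
Require Import Defs.
From HB Require Import structures.
From mathcomp Require Import all_boot all_order all_algebra.
From mathcomp Require Import lra.
Set Implicit Arguments. Unset Strict Implicit. Unset Printing Implicit Defensive.
Import Order.TTheory GRing.Theory Num.Theory.

Section Walks.
Variables (V E : finType) (tl hd : E -> V).

Lemma walk_cat u p m q w : is_walk tl hd u p m -> is_walk tl hd m q w ->
  is_walk tl hd u (p ++ q) w.
Proof.
elim: p u => [|e p IH] u /=; first by move=> /eqP ->.
by move=> /andP[-> H] H2; rewrite (IH _ H H2).
Qed.

Lemma walk_prefix u p w y : is_walk tl hd u p w -> y \in walk_nodes hd u p ->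
  exists q, is_walk tl hd u q y /\ (size q <= size p)%N.
Proof.
elim: p u => [|e p IH] u /=.
  by move=> /eqP -> ; rewrite inE => /eqP ->; exists [::]; rewrite /=.
move=> /andP[/eqP He Hw]; rewrite inE => /orP[/eqP ->|Hy].
  by exists [::]; rewrite /=.
have [q [Hq Hs]] := IH _ Hw Hy.
by exists (e :: q); rewrite /= He eqxx Hq.
Qed.

Lemma walk_uniq u p w : acyclic tl hd -> is_walk tl hd u p w ->
  uniq (walk_nodes hd u p).
Proof.
move=> Hac; elim: p u => [|e p IH] u //= /andP[/eqP He Hw].
have := IH _ Hw; rewrite /walk_nodes /= => ->; rewrite andbT.
apply/negP => Hu.
have [q [Hq _]] := walk_prefix Hw (Hu : u \in walk_nodes hd (hd e) p).
have := Hac u (e :: q) isT; rewrite /= He eqxx Hq //.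
Qed.

Lemma walk_size u p w : acyclic tl hd -> is_walk tl hd u p w ->
  (size p < #|V|)%N.
Proof.
move=> Hac Hw; have Hu := walk_uniq Hac Hw.
have := max_card (mem (walk_nodes hd u p)).
by rewrite (card_uniqP Hu) /walk_nodes /= size_map.
Qed.
End Walks.

Section Cover.
Variables (V E : finType) (tl hd : E -> V).
Definition tl2 (k : E * bool) : V * bool := (tl k.1, k.2).
Definition hd2 (k : E * bool) : V * bool := (hd k.1, ~~ k.2).

Lemma proj_walk u b p w b' : is_walk tl2 hd2 (u, b) p (w, b') ->
  is_walk tl hd u (map fst p) w /\ b' = b (+) odd (size p).
Proof.
elim: p u b => [|[e c] p IH] u b /=.
  by move=> /eqP [-> ->]; rewrite eqxx addbF.
move=> /andP[/eqP [He Hc] Hw]; have [H1 H2] := IH _ _ Hw.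
by rewrite He eqxx H1 H2 Hc; split=> //; case: b {Hc}; case: (odd _).
Qed.

Fixpoint lift (b : bool) (p : seq E) : seq (E * bool) :=
  if p is e :: p' then (e, b) :: lift (~~ b) p' else [::].

Lemma lift_fst b p : map fst (lift b p) = p.
Proof. by elim: p b => //= e p IH b; rewrite IH. Qed.

Lemma lift_walk u b p w : is_walk tl hd u p w ->
  is_walk tl2 hd2 (u, b) (lift b p) (w, b (+) odd (size p)).
Proof.
elim: p u b => [|e p IH] u b /=; first by move=> /eqP ->; rewrite addbF.
move=> /andP[/eqP He Hw]; rewrite /tl2 He eqxx /=.
have := IH _ (~~ b) Hw; rewrite /hd2 /=.
by case: b; case: (odd _).
Qed.
End Cover.

Local Open Scope ring_scope.

Section Th.
Variable R : realFieldType.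
Definition ind (p q th : R) : R := if (p < th) && (th <= q) then 1 else 0.
Definition gap (lo p q : R) : R := Num.max 0 (Num.max lo q - Num.max lo p).

Ltac mx := repeat match goal with
  | |- context [Num.max ?a ?b] => case: (ltrP a b) => ?
  | |- context [if ?a < ?b then _ else _] => case: (ltrP a b) => ?
  | |- context [if ?a <= ?b then _ else _] => case: (lerP a b) => ?
  end.

Lemma mxl (x y : R) : y <= x -> Num.max x y = x. Proof. exact: max_l. Qed.
Lemma mxr (x y : R) : x <= y -> Num.max x y = y. Proof. exact: max_r. Qed.

Lemma L1 (lo p q : R) : lo < 1 -> (p <= lo \/ 1 <= p) -> (q <= lo \/ 1 <= q) ->
  (1 - lo) * ind p q 1 <= gap lo p q.
Proof.
move=> h1 [hp|hp] [hq|hq]; rewrite /ind /gap.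
- rewrite (mxl hp) (mxl hq); case: (ltrP p 1) => ? /=; case: (lerP 1 q) => ? /=; mx; lra.
- rewrite (mxl hp) (@mxr lo q) ?(le_trans (ltW h1) hq) //; case: (ltrP p 1) => ? /=; case: (lerP 1 q) => ? /=; mx; lra.
- rewrite (@mxr lo p) ?(le_trans (ltW h1) hp) // (mxl hq); case: (ltrP p 1) => ? /=; case: (lerP 1 q) => ? /=; mx; lra.
- rewrite (@mxr lo p) ?(le_trans (ltW h1) hp) // (@mxr lo q) ?(le_trans (ltW h1) hq) //; case: (ltrP p 1) => ? /=; case: (lerP 1 q) => ? /=; mx; lra.
Qed.

Lemma L2 (lo b p q : R) : lo < b -> (p <= lo \/ b <= p) -> (q <= lo \/ b <= q) ->
  gap lo p q = (b - lo) * ind p q b + gap b p q.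
Proof.
move=> h1 [hp|hp] [hq|hq]; rewrite /ind /gap.
- rewrite (mxl hp) (mxl hq) (@mxl b p) ?(le_trans hp (ltW h1)) // (@mxl b q) ?(le_trans hq (ltW h1)) //.
  case: (ltrP p b) => ? /=; case: (lerP b q) => ? /=; mx; lra.
- rewrite (mxl hp) (@mxr lo q) ?(le_trans (ltW h1) hq) // (@mxl b p) ?(le_trans hp (ltW h1)) // (mxr hq).
  case: (ltrP p b) => ? /=; case: (lerP b q) => ? /=; mx; lra.
- rewrite (@mxr lo p) ?(le_trans (ltW h1) hp) // (mxl hq) (mxr hp) (@mxl b q) ?(le_trans hq (ltW h1)) //.
  case: (ltrP p b) => ? /=; case: (lerP b q) => ? /=; mx; lra.
- rewrite (@mxr lo p) ?(le_trans (ltW h1) hp) // (@mxr lo q) ?(le_trans (ltW h1) hq) // (mxr hp) (mxr hq).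
  case: (ltrP p b) => ? /=; case: (lerP b q) => ? /=; mx; lra.
Qed.

End Th.
Section Th. Variable R : realFieldType.
Section Thr.
Variables (N K : finType) (tl hd : K -> N) (w : K -> R).
Hypothesis hw : forall k, 0 <= w k.
Definition S (a : N -> R) th := \sum_k w k * ind (a (tl k)) (a (hd k)) th.
Definition G (a : N -> R) lo := \sum_k w k * gap lo (a (tl k)) (a (hd k)).

Lemma S_ge0 a th : 0 <= S a th.
Proof. apply: sumr_ge0 => k _; apply: mulr_ge0 => //; rewrite /ind; case: ifP => _ //; lra. Qed.

Lemma base lo a : lo < 1 -> (forall v, a v <= lo \/ 1 <= a v) ->
  exists th, lo < th <= 1 /\ (1 - lo) * S a th <= G a lo.
Proof.
move=> h1 hv; exists 1; split; first by apply/andP; split=> //; lra.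
rewrite /S /G mulr_sumr; apply: ler_sum => k _; rewrite mulrCA; apply: ler_wpM2l => //.
exact: L1.
Qed.

Lemma thresh (n : nat) : forall (lo : R) (a : N -> R), lo < 1 -> (#|[set v | (lo < a v < 1)%R]| <= n)%N ->
  exists th, lo < th <= 1 /\ (1 - lo) * S a th <= G a lo.
Proof.
elim: n => [|n IH] lo a h1 hc.
  apply: base => // v; move: hc; rewrite leqn0 cards_eq0 => /eqP H0.
  have : v \notin [set v | lo < a v < 1] by rewrite H0 inE.
  rewrite inE negb_and -!leNgt => /orP[] ?; [left|right] => //.
case: (pickP (fun v => lo < a v < 1)) => [v0 Hv0|H0]; last first.
  apply: base => // v; have := H0 v => /= /negbT; rewrite negb_and -!leNgt => /orP[] ?; [left|right] => //.
case: (@arg_minP _ R N v0 (fun v => lo < a v < 1) a Hv0) => /= m /andP[Hm1 Hm2] Hmin.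
set b := a m. have hlb : lo < b by []. have hb1 : b < 1 by [].
have hv : forall v, a v <= lo \/ b <= a v.
  move=> v; case: (lerP (a v) lo) => hv1; [by left|right].
  case: (ltrP (a v) 1) => hv2; first by apply: Hmin; rewrite hv1 hv2.
  rewrite /b; lra.
have [th' [/andP[th1 th2] Hb]] : exists th, b < th <= 1 /\ (1 - b) * S a th <= G a b.
  apply: IH => //.
  have sub : [set v | b < a v < 1] \subset [set v | lo < a v < 1] :\ m.
    apply/subsetP => v; rewrite !inE => /andP[h3 h4]; rewrite h4 andbT.
    apply/andP; split; first by apply/eqP => Hvm; move: h3; rewrite Hvm /b ltxx.
    rewrite /b in h3; lra.
  apply: leq_trans (subset_leq_card sub) _.
  move: hc; rewrite (cardsD1 m) inE Hm1 Hm2 /= add1n ltnS //.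
have eqG : G a lo = (b - lo) * S a b + G a b.
  rewrite /G /S mulr_sumr -big_split /=; apply: eq_bigr => k _.
  by rewrite (L2 Hm1 (hv (tl k)) (hv (hd k))) mulrDr mulrCA.
case: (lerP ((1 - lo) * S a b) (G a lo)) => Hc.
  by exists b; split => //; apply/andP; split => //; lra.
exists th'; split; first by apply/andP; split => //; lra.
have := S_ge0 a th'; have := S_ge0 a b => ? ?.
have St : S a th' < S a b.
  have : (1 - b) * S a th' < (1 - b) * S a b by lra.
  by rewrite ltr_pM2l //; lra.
have : (b - lo) * S a th' <= (b - lo) * S a b by rewrite ler_wpM2l //; lra.
lra.
Qed.
End Thr.
End Th.

Section AllSeqs.
Variable K : finType.
Fixpoint allseqs (k : nat) : seq (seq K) :=
  if k is k'.+1 then [::] :: [seq e :: p | e <- enum K, p <- allseqs k'] else [:: [::]].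
Lemma mem_allseqs k p : (size p <= k)%N -> p \in allseqs k.
Proof.
elim: k p => [|k IH] [|e p] //=; rewrite ?inE ?eqxx //.
move=> Hs; apply/orP; right.
by apply: (allpairs_f (fun e p => e :: p)); rewrite ?mem_enum ?IH.
Qed.
End AllSeqs.

Section Main.
Variables (R : realFieldType) (V E : finType) (tl hd : E -> V) (s t : V) (x : E -> R).
Hypothesis Hac : acyclic tl hd.
Hypothesis Hx : opb_feasible tl hd s t x.

Definition weight (p : seq (E * bool)%type) : R := \sum_(k <- p) x k.1.
Definition aa (v : V * bool) : R :=
  \big[Num.min/1]_(p <- allseqs (E * bool)%type #|V| | is_walk (tl2 tl) (hd2 hd) (s, false) p v) weight p.

Lemma weight_ge0 p : 0 <= weight p.
Proof. by apply: sumr_ge0 => k _; case: Hx => H _; apply: H. Qed.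

Lemma aa_ge0 v : 0 <= aa v.
Proof. by apply: le_bigmin => // *; apply: weight_ge0. Qed.

Lemma aa_le1 v : aa v <= 1.
Proof. exact: bigmin_le_id. Qed.

Lemma walk2_size u p w : is_walk (tl2 tl) (hd2 hd) u p w -> (size p <= #|V|)%N.
Proof.
case: u w => u b [w b'] /(proj_walk) [H _].
by have := walk_size Hac H; rewrite size_map => /ltnW.
Qed.

Lemma aa_le p v : is_walk (tl2 tl) (hd2 hd) (s, false) p v -> aa v <= weight p.
Proof.
move=> Hw; apply: ge_bigmin_seq => //; apply: mem_allseqs; exact: walk2_size Hw.
Qed.

Lemma aa_s : aa (s, false) = 0.
Proof.
apply/le_anti; rewrite aa_ge0 andbT.
by have := aa_le (p := [::]) (v := (s,false)) (eqxx _); rewrite /weight big_nil.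
Qed.

Lemma aa_witness v : aa v < 1 ->
  exists p, is_walk (tl2 tl) (hd2 hd) (s, false) p v /\ weight p = aa v.
Proof.
rewrite /aa; elim/big_rec: _ => [|p y Hp IH]; first by rewrite ltxx.
case: (lerP (weight p) y) => _ H.
  by exists p.
exact: IH.
Qed.

Lemma aa_edge k : aa (hd2 hd k) <= aa (tl2 tl k) + x k.1.
Proof.
have x0 : 0 <= x k.1 by case: Hx => H _; apply: H.
case: (ltrP (aa (tl2 tl k)) 1) => H; last by have := aa_le1 (hd2 hd k); lra.
have [p [Hw <-]] := aa_witness H.
have Hw2 : is_walk (tl2 tl) (hd2 hd) (s, false) (p ++ [:: k]) (hd2 hd k).
  by apply: walk_cat Hw _; rewrite /= !eqxx.
by have := aa_le Hw2; rewrite /weight big_cat big_seq1.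
Qed.

Lemma aa_t : s != t -> aa (t, true) = 1.
Proof.
move=> _; apply/le_anti; rewrite aa_le1 /=; rewrite leNgt; apply/negP => H.
have [p [Hw Hwt]] := aa_witness H.
have [Hp Hodd] := proj_walk Hw.
have Hop : odd_path tl hd s t (map fst p).
  rewrite /odd_path /is_path Hp (walk_uniq Hac Hp) size_map.
  by move: Hodd; case: (odd _).
case: Hx => _ /(_ _ Hop); rewrite big_map -/(weight p) Hwt; lra.
Qed.
End Main.

Lemma cross (R : realFieldType) (N K : finType) (tl hd : K -> N) (f : N -> R) th q :
  forall u w, is_walk tl hd u q w -> f u < th -> th <= f w ->
  exists k, k \in q /\ f (tl k) < th /\ th <= f (hd k).
Proof.
elim: q => [|k q IH] u w /=; first by move=> /eqP -> ? ?; lra.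
move=> /andP[/eqP Hk Hw] Hu Hwt.
case: (lerP th (f (hd k))) => H.
  by exists k; rewrite inE eqxx Hk.
have [k' [Hk' H']] := IH _ _ Hw H Hwt.
by exists k'; rewrite inE Hk' orbT.
Qed.

Lemma le_sum_seq (R : realFieldType) (T : eqType) (f : T -> R) (p : seq T) e :
  (forall e, 0 <= f e) -> e \in p -> f e <= \sum_(e' <- p) f e'.
Proof.
move=> H0; elim: p => [|e' p IH] //; rewrite inE big_cons => /orP[/eqP ->|Hp].
  have : 0 <= \sum_(e'' <- p) f e'' by apply: sumr_ge0 => i _; apply: H0.
  by lra.
by have := IH Hp; have := H0 e'; lra.
Qed.

Lemma ind_ge0 (R : realFieldType) (p q th : R) : 0 <= ind p q th.
Proof. by rewrite /ind; case: ifP => _ //; lra. Qed.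

Unset Implicit Arguments.
Theorem corollary3p6 (R : realFieldType) (V E : finType) (tl hd : E -> V)
    (s t : V) (c : E -> R) :
  acyclic tl hd -> s != t -> (forall e, 0 <= c e) ->
  forall x : E -> R, opb_feasible tl hd s t x ->
  exists y : E -> R, opb_integral tl hd s t y /\
    cost c y <= 2 * cost c x.
Proof.
move=> Hac Hst Hc x Hx.
set a := aa tl hd s x.
have x0 : forall e, 0 <= x e by case: Hx.
have [th [/andP[th0 th1] Hth]] := @thresh R _ _ (tl2 tl) (hd2 hd) (fun k => c k.1)
   (fun k => Hc k.1) #|[set v | (0 < a v < 1)%R]| 0 a ltr01 (leqnn _).
rewrite subr0 mul1r in Hth.
pose y e : R := if [exists b : bool, (a (tl e, b) < th) && (th <= a (hd e, ~~ b))] then 1 else 0.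
have y01 : forall e, y e = 0 \/ y e = 1 by move=> e; rewrite /y; case: ifP => _; [right|left].
have y0 : forall e, 0 <= y e by move=> e; case: (y01 e) => ->; lra.
exists y; split.
  split=> //; split=> // p /andP[/andP[Hw Hu] Hodd].
  have Hl := lift_walk false Hw; rewrite Hodd /= in Hl.
  have Ha0 : a (s, false) < th by rewrite /a (aa_s Hac Hx).
  have Ha1 : th <= a (t, true) by rewrite /a (aa_t Hac Hx Hst).
  have [k [Hk [H1 H2]]] := cross Hl Ha0 Ha1.
  have Hk1 : k.1 \in p by rewrite -(lift_fst false p); apply: map_f.
  have Hy : y k.1 = 1.
    rewrite /y; case: existsP => // H; exfalso; apply: H; exists k.2.
    by rewrite -/(tl2 tl k) -/(hd2 hd k) H1 H2.
  by have := le_sum_seq y0 Hk1; rewrite Hy.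
apply: (@le_trans _ _ (S (tl2 tl) (hd2 hd) (fun k => c k.1) a th)).
  have -> : S (tl2 tl) (hd2 hd) (fun k => c k.1) a th =
    \sum_e \sum_(b : bool) c e * ind (a (tl2 tl (e, b))) (a (hd2 hd (e, b))) th
    by rewrite pair_bigA.
  rewrite /cost; apply: ler_sum => e _; rewrite big_bool /=.
  have := ind_ge0 (a (tl e, true)) (a (hd e, false)) th.
  have := ind_ge0 (a (tl e, false)) (a (hd e, true)) th.
  have := Hc e => ? ? ?.
  have ? := mulr_ge0 (Hc e) (ind_ge0 (a (tl e, true)) (a (hd e, false)) th).
  have ? := mulr_ge0 (Hc e) (ind_ge0 (a (tl e, false)) (a (hd e, true)) th).
  rewrite /y; case: existsP => [[b /andP[Hb1 Hb2]]|_]; last by rewrite mulr0; lra.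
  rewrite mulr1; case: b Hb1 Hb2 => /= Hb1 Hb2.
    by rewrite {1}/ind Hb1 Hb2 /= mulr1; lra.
  by rewrite {2}/ind Hb1 Hb2 /= mulr1; lra.
apply: (le_trans Hth).
have -> : G (tl2 tl) (hd2 hd) (fun k => c k.1) a 0 =
    \sum_e \sum_(b : bool) c e * gap 0 (a (tl2 tl (e, b))) (a (hd2 hd (e, b)))
    by rewrite pair_bigA.
rewrite /cost mulr_sumr; apply: ler_sum => e _; rewrite big_bool /=.
have Hg : forall b, gap 0 (a (tl e, b)) (a (hd e, ~~ b)) <= x e.
  move=> b; have := aa_edge Hac Hx (e, b); rewrite /tl2 /hd2 /= -/a => He.
  have Hp : 0 <= a (tl e, b) by apply: aa_ge0 Hx _.
  have Hq : 0 <= a (hd e, ~~ b) by apply: aa_ge0 Hx _.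
  rewrite /gap (max_r Hp) (max_r Hq) ge_max; apply/andP; split; [exact: x0|lra].
have := ler_wpM2l (Hc e) (Hg true); have := ler_wpM2l (Hc e) (Hg false) => /= ? ?.
lra.
Qed.
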